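(* Let $n$ be a nonnegative integer and let $a,b,c\in\mathbb{C}$ be such that all hypergeometric series and quotients below are defined (no lower parameter is zero or a negative integer). Then \[ {}_4F_3\!\left(\left.{-n,a,a-c-n,c \atop \frac{a-n}{2},\frac{1+a-n}{2},b}\right| \frac{1}{4}\right) =\frac{(1+c-a)_n(b-c)_n}{(1-a)_n(b)_n}\, {}_4F_3\!\left(\left.{-n,1+c-b,1-b-n,c \atop \frac{1+c-b-n}{2},\frac{2+c-b-n}{2},1+c-a}\right| \frac{1}{4}\right). \]
   Context: For $a\in\mathbb{C}$, $(a)_0=1$ and $(a)_k=a(a+1)\cdots(a+k-1)$ for $k\ge1$. The hypergeometric series is ${}_rF_s\!\left(\left.{\alpha_1,\ldots,\alpha_r\atop \beta_1,\ldots,\beta_s}\right|z\right)=\sum_{k\ge0}\frac{(\alpha_1)_k\cdots(\alpha_r)_k}{k!(\beta_1)_k\cdots(\beta_s)_k}z^k$, with no lower parameter zero or a negative integer; when an upper parameter is $-n$ it is a finite sum over $0\le k\le n$. *)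

(* Defs.v *)
From mathcomp Require Import all_boot all_order all_algebra.
From mathcomp Require Import complex.
From mathcomp Require Import reals.
Set Implicit Arguments. Unset Strict Implicit. Unset Printing Implicit Defensive.
Import Order.TTheory GRing.Theory Num.Theory.
Local Open Scope ring_scope.

Definition poch {F : comRingType} (a : F) (k : nat) : F :=
  \prod_(i < k) (a + i%:R).

Definition admissible_lower {F : comRingType} (b : F) : Prop :=
  forall m : nat, b <> - m%:R.

Definition F43_term {F : fieldType} (n : nat) (a2 a3 a4 b1 b2 b3 z : F) : F :=
  \sum_(k < n.+1)
    (poch (- n%:R) k * poch a2 k * poch a3 k * poch a4 k)
    / (k`!%:R * poch b1 k * poch b2 k * poch b3 k) * z ^+ k.

(* Main.v *)
Require Import Defs.
From mathcomp Require Import all_boot all_order all_algebra.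
From mathcomp Require Import complex.
From mathcomp Require Import reals.
From mathcomp Require Import ring zify.
Import GRing.Theory Num.Theory.
Local Open Scope ring_scope.


Lemma binM2 (n k i : nat) : ('C(n,k) * 'C(n-k,i) = 'C(n,i) * 'C(n-i,k))%N.
Proof.
case: (leqP (k + i) n) => H; last first.
  case: (leqP k n) => Hk; last first.
    rewrite (@bin_small n k) // mul0n.
    have -> : ('C(n - i, k) = 0)%N by apply: bin_small; lia.
    by rewrite muln0.
  case: (leqP i n) => Hi; last first.
    rewrite (@bin_small n i) // mul0n.
    have -> : ('C(n - k, i) = 0)%N by apply: bin_small; lia.
    by rewrite muln0.
  have -> : ('C(n - k, i) = 0)%N by apply: bin_small; lia.
  have -> : ('C(n - i, k) = 0)%N by apply: bin_small; lia.
  by rewrite !muln0.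
have F1 := bin_fact (_ : k <= n)%N.
have F2 := bin_fact (_ : i <= n)%N.
have F3 := bin_fact (_ : i <= n - k)%N.
have F4 := bin_fact (_ : k <= n - i)%N.
apply/eqP; rewrite -(@eqn_pmul2r (k`! * i`! * (n-k-i)`!)); last by rewrite !muln_gt0 !fact_gt0.
have -> : ('C(n, k) * 'C(n - k, i) * (k`! * i`! * (n - k - i)`!) =
   'C(n, k) * k`! * ('C(n - k, i) * (i`! * (n - k - i)`!)))%N by ring.
have -> : ('C(n, i) * 'C(n - i, k) * (k`! * i`! * (n - k - i)`!) =
   'C(n, i) * i`! * ('C(n - i, k) * (k`! * (n - i - k)`!)))%N.
  have -> : (n - i - k = n - k - i)%N by lia. ring.
rewrite F3 ?F4 -?mulnA ?F1 ?F2 //; try lia.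
Qed.

Section P.
Variable F : comRingType.

Lemma pochD (x : F) m l : poch x (m + l) = poch x m * poch (x + m%:R) l.
Proof.
rewrite /poch big_split_ord /=; congr (_ * _).
by apply: eq_bigr => i _; rewrite natrD addrA.
Qed.

Lemma poch0 (x : F) : poch x 0 = 1.
Proof. by rewrite /poch big_ord0. Qed.

Lemma poch1 (x : F) : poch x 1 = x.
Proof. by rewrite /poch big_ord1 addr0. Qed.

Lemma pochSr (x : F) m : poch x m.+1 = poch x m * (x + m%:R).
Proof. by rewrite -addn1 pochD /poch big_ord1 addr0. Qed.

Lemma pochSl (x : F) m : poch x m.+1 = x * poch (x + 1) m.
Proof. by rewrite -add1n pochD /poch big_ord1 addr0. Qed.

Lemma poch_refl (x : F) m : poch (- x - m%:R + 1) m = (-1) ^+ m * poch x m.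
Proof.
elim: m x => [|m IH] x; first by rewrite !poch0 expr0 mulr1.
rewrite pochSl.
have -> : - x - m.+1%:R + 1 + 1 = - x - m%:R + 1 by rewrite -natr1; ring.
rewrite IH pochSr exprS.
have -> : - x - m.+1%:R + 1 = - (x + m%:R) by rewrite -natr1; ring.
ring.
Qed.

Lemma poch_negn n k : poch (- n%:R : F) k = (-1) ^+ k * ('C(n, k) * k`!)%:R.
Proof.
rewrite bin_ffact.
elim: k => [|k IH]; first by rewrite poch0 ffactn0 expr0 mulr1.
rewrite pochSr IH ffactnSr exprS.
case: (leqP k n) => H.
  rewrite natrM natrB //; ring.
have -> : (n ^_ k = 0)%N by apply: ffact_small.
rewrite !mul0n !mulr0 !mul0r; done.
Qed.

Lemma vander m (x y : F) :
  \sum_(p < m.+1) ('C(m, p))%:R * (-1) ^+ p * poch y p * poch (x + p%:R) (m - p)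
  = poch (x - y) m.
Proof.
elim: m x y => [|m IH] x y.
  by rewrite big_ord1 /= !poch0 bin0 expr0 !mulr1 .
rewrite big_ord_recl /=.
under eq_bigr => p _ do rewrite /bump /= add1n binS natrD !mulrDl.
rewrite big_split /=.
set h := fun p : nat => (-1) ^+ p * poch y p * poch (x + p%:R) (m.+1 - p).
have E1 : \sum_(i < m.+1) ('C(m, i.+1))%:R * (-1) ^+ i.+1 * poch y i.+1 *
      poch (x + i.+1%:R) (m.+1 - i.+1) = \sum_(i < m.+1) ('C(m, i.+1))%:R * h i.+1.
  by apply: eq_bigr => i _; rewrite /h; ring.
have E2 : ('C(m.+1, 0))%:R * (-1) ^+ 0 * poch y 0 * poch (x + 0%:R) (m.+1 - 0)
       = ('C(m, 0))%:R * h 0 :> F by rewrite /h !bin0; ring.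
rewrite E1 E2 addrA -(big_ord_recl _ (fun i => ('C(m, i))%:R * h i)) big_ord_recr /=.
rewrite bin_small // mul0r addr0.
have E3 : \sum_(i < m.+1) ('C(m, i))%:R * h i =
   (x + m%:R) * \sum_(p < m.+1) ('C(m, p))%:R * (-1) ^+ p * poch y p * poch (x + p%:R) (m - p).
  rewrite mulr_sumr; apply: eq_bigr => [[i Hi]] _ /=; rewrite /h.
  rewrite subSn // -addn1 pochD. rewrite -addrA -natrD subnKC // /poch big_ord1 addr0; ring.
have E4 : \sum_(i < m.+1) ('C(m, i))%:R * (-1) ^+ i.+1 * poch y i.+1 *
      poch (x + i.+1%:R) (m.+1 - i.+1) = - y *
   \sum_(p < m.+1) ('C(m, p))%:R * (-1) ^+ p * poch (y + 1) p * poch (x + 1 + p%:R) (m - p).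
  rewrite mulr_sumr; apply: eq_bigr => [[i Hi]] _ /=.
  rewrite subSS pochSl exprS -natr1. rewrite (addrC (i%:R) 1) addrA. ring.
rewrite E3 E4 !IH.
have -> : x + 1 - (y + 1) = x - y by ring.
rewrite pochSr; ring.
Qed.

Lemma sum_widen m N (f : nat -> F) : (m < N)%N ->
  \sum_(p < m.+1) ('C(m, p))%:R * f p = \sum_(p < N) ('C(m, p))%:R * f p.
Proof.
move=> H; rewrite (big_ord_widen N (fun p => ('C(m, p))%:R * f p) H) big_mkcond /=.
apply: eq_bigr => i _; case: ifP => // /negbT; rewrite -leqNgt => Hi.
by rewrite bin_small // mul0r.
Qed.

End P.

Section C.
Variable F : comRingType.

Lemma step1 n k (b c : F) : (k <= n)%N ->
  poch (b - c - k%:R) (n-k) * poch (b + (n-k)%:R) k =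
  \sum_(i < n.+1) ('C(n-k,i))%:R * ((-1)^+i * poch (c + k%:R) i * poch (b + i%:R) (n-i)).
Proof.
move=> Hk.
have -> : b - c - k%:R = b - (c + k%:R) by ring.
rewrite -(@vander F (n-k) b (c + k%:R)) mulr_suml.
have -> : \sum_(i < (n - k).+1)
    'C(n - k, i)%:R * (-1) ^+ i * poch (c + k%:R) i * poch (b + i%:R) (n - k - i) *
    poch (b + (n - k)%:R) k =
  \sum_(i < (n - k).+1) 'C(n - k, i)%:R * ((-1) ^+ i * poch (c + k%:R) i * (poch (b + i%:R) (n - k - i) *
    poch (b + (n - k)%:R) k)).
  by apply: eq_bigr => i _; ring.
rewrite (@sum_widen F (n-k) n.+1 (fun i => (-1) ^+ i * poch (c + k%:R) i * (poch (b + i%:R) (n - k - i) *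
    poch (b + (n - k)%:R) k))) ?ltnS ?leq_subr //.
apply: eq_bigr => [[i Hi]] _ /=.
case: (leqP i (n-k)) => H; last by rewrite bin_small // !mul0r.
have -> : poch (b + (n - k)%:R) k = poch (b + i%:R + (n - k - i)%:R) k.
  by rewrite -addrA -natrD subnKC.
rewrite -pochD.
by have -> : (n - k - i + k = n - i)%N by lia.
Qed.

Lemma step3 n i (a c : F) : (i < n.+1)%N ->
  \sum_(k < n.+1) (-1)^+k * ('C(n,k))%:R * poch c k * poch (1 + c - a + k%:R) (n-k)
     * ('C(n-k,i))%:R * (-1)^+i * poch (c + k%:R) i
  = (-1)^+n * (-1)^+i * ('C(n,i))%:R * poch (a - n%:R + (2 * i)%:R) (n-i)
     * poch (a - c - n%:R) i * poch c i.
Proof.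
rewrite ltnS => Hi.
set m := (n - i)%N.
have Hn : n = (m + i)%N by rewrite /m subnK.
have E : \sum_(k < n.+1) (-1)^+k * ('C(n,k))%:R * poch c k * poch (1 + c - a + k%:R) (n-k)
     * ('C(n-k,i))%:R * (-1)^+i * poch (c + k%:R) i =
   ('C(n,i))%:R * (-1)^+i * poch c i *
   \sum_(k < n.+1) ('C(m,k))%:R * ((-1)^+k * poch (c + i%:R) k * poch (1 + c - a + k%:R) (n-k)).
  rewrite mulr_sumr; apply: eq_bigr => k _.
  have e1 : poch c k * poch (c + k%:R) i = poch c i * poch (c + i%:R) k.
    by rewrite -!pochD addnC.
  have e2 : ('C(n,k))%:R * ('C(n-k,i))%:R = ('C(n,i))%:R * ('C(m,k))%:R :> F.
    by rewrite -!natrM binM2.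
  transitivity ((-1)^+k * (('C(n,k))%:R * ('C(n-k,i))%:R) * (poch c k * poch (c + k%:R) i)
     * poch (1 + c - a + k%:R) (n-k) * (-1)^+i); first by ring.
  rewrite e1 e2; ring.
rewrite E -(@sum_widen F m n.+1 (fun k => (-1)^+k * poch (c + i%:R) k * poch (1 + c - a + k%:R) (n-k))); last by rewrite ltnS /m leq_subr.
have E2 : \sum_(k < m.+1) ('C(m,k))%:R * ((-1)^+k * poch (c + i%:R) k * poch (1 + c - a + k%:R) (n-k))
   = \sum_(k < m.+1) ('C(m,k))%:R * (-1)^+k * poch (c + i%:R) k * poch (1 + c - a + k%:R) (m-k)
       * poch (1 + c - a + m%:R) i.
  apply: eq_bigr => [[k Hk]] _ /=.
  have -> : (n - k = (m - k) + i)%N by lia.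
  rewrite pochD.
  have -> : 1 + c - a + k%:R + (m - k)%:R = 1 + c - a + m%:R.
    by rewrite -addrA -natrD subnKC //; lia.
  ring.
rewrite E2 -mulr_suml vander.
have -> : 1 + c - a - (c + i%:R) = - (a - n%:R + (2 * i)%:R) - m%:R + 1.
  rewrite Hn natrD natrM; ring.
have -> : 1 + c - a + m%:R = - (a - c - n%:R) - i%:R + 1.
  rewrite Hn natrD; ring.
rewrite !poch_refl Hn exprD; ring.
Qed.

Lemma core n (a b c : F) :
 \sum_(k < n.+1) (-1)^+n * (-1)^+k * ('C(n,k))%:R * poch (a - n%:R + (2*k)%:R) (n-k)
    * poch (a - c - n%:R) k * poch c k * poch (b + k%:R) (n-k)
 = \sum_(k < n.+1) (-1)^+k * ('C(n,k))%:R * poch c k * poch (b - c - k%:R) (n-k)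
    * poch (1 + c - a + k%:R) (n-k) * poch (b + (n-k)%:R) k.
Proof.
symmetry.
have E : \sum_(k < n.+1) (-1)^+k * ('C(n,k))%:R * poch c k * poch (b - c - k%:R) (n-k)
    * poch (1 + c - a + k%:R) (n-k) * poch (b + (n-k)%:R) k
  = \sum_(k < n.+1) \sum_(i < n.+1) ((-1)^+k * ('C(n,k))%:R * poch c k * poch (1 + c - a + k%:R) (n-k)
     * ('C(n-k,i))%:R * (-1)^+i * poch (c + k%:R) i) * poch (b + i%:R) (n-i).
  apply: eq_bigr => [[k Hk]] _ /=.
  transitivity ((-1)^+k * ('C(n,k))%:R * poch c k * poch (1 + c - a + k%:R) (n-k) *
     (poch (b - c - k%:R) (n-k) * poch (b + (n-k)%:R) k)); first by ring.
  rewrite step1 // mulr_sumr; apply: eq_bigr => i _; ring.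
rewrite E exchange_big /=; apply: eq_bigr => [[i Hi]] _ /=.
by rewrite -mulr_suml step3.
Qed.

End C.

Lemma poch_nz (F : idomainType) (x : F) k : admissible_lower x -> poch x k != 0.
Proof.
move=> H; elim: k => [|k IH]; first by rewrite poch0 oner_neq0.
rewrite pochSr mulf_neq0 // addr_eq0; apply/eqP; exact: H.
Qed.

Lemma poch_half (F : fieldType) (u : F) k : (2 : F) != 0 ->
  poch (u / 2) k * poch ((1 + u) / 2) k * 4 ^+ k = poch u (2 * k).
Proof.
move=> h2; elim: k => [|k IH]; first by rewrite !poch0 expr0 !mulr1.
rewrite mulnS addnC pochD -IH !pochSr exprS.
rewrite ?poch0 ?mul1r.
rewrite (natrM F 2 k); by field.
Qed.

Theorem proposition5p1 (R : realType) (n : nat) (a b c : R[i])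
  (h1 : admissible_lower ((a - n%:R) / 2))
  (h2 : admissible_lower ((1 + a - n%:R) / 2))
  (h3 : admissible_lower b)
  (h4 : admissible_lower ((1 + c - b - n%:R) / 2))
  (h5 : admissible_lower ((2 + c - b - n%:R) / 2))
  (h6 : admissible_lower (1 + c - a))
  (h7 : poch (1 - a) n != 0) :
  F43_term n a (a - c - n%:R) c ((a - n%:R) / 2) ((1 + a - n%:R) / 2) b (1 / 4)
  = (poch (1 + c - a) n * poch (b - c) n) / (poch (1 - a) n * poch b n)
    * F43_term n (1 + c - b) (1 - b - n%:R) c
        ((1 + c - b - n%:R) / 2) ((2 + c - b - n%:R) / 2) (1 + c - a) (1 / 4).
Proof.
have h2nz : (2 : R[i]) != 0 by rewrite pnatr_eq0.
have h4nz : (4 : R[i]) != 0 by rewrite pnatr_eq0.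
have h2' : admissible_lower ((1 + (a - n%:R)) / 2) by rewrite addrA.
have hD : poch (1 - a) n * poch b n != 0 by rewrite mulf_neq0 // poch_nz.
have L : F43_term n a (a - c - n%:R) c ((a - n%:R) / 2) ((1 + a - n%:R) / 2) b (1 / 4)
   * (poch (1 - a) n * poch b n) =
   \sum_(k < n.+1) (-1)^+n * (-1)^+k * ('C(n,k))%:R * poch (a - n%:R + (2*k)%:R) (n-k)
    * poch (a - c - n%:R) k * poch c k * poch (b + k%:R) (n-k).
  rewrite /F43_term mulr_suml; apply: eq_bigr => [[k Hk]] _ /=.
  rewrite ltnS in Hk.
  have eb : poch b n = poch b k * poch (b + k%:R) (n-k) by rewrite -pochD subnKC.
  have ea : poch (1 - a) n = (-1)^+n * poch (a - n%:R) n.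
    by rewrite -poch_refl; congr poch; ring.
  have eW := @poch_half _ (a - n%:R) k h2nz.
  have eYX : poch (a - n%:R) n * poch a k = poch (a - n%:R) (2 * k) * poch (a - n%:R + (2*k)%:R) (n-k).
    rewrite -pochD.
    have -> : (2 * k + (n - k) = n + k)%N by lia.
    by rewrite pochD; congr (_ * poch _ _); ring.
  rewrite -eW in eYX.
  have eV : poch (a - n%:R + (2*k)%:R) (n-k) = poch (a - n%:R) n * poch a k /
     (poch ((a - n%:R) / 2) k * poch ((1 + (a - n%:R)) / 2) k * 4 ^+ k).
    by rewrite eYX; field; rewrite expf_neq0 // ?poch_nz.
  rewrite eV eb ea poch_negn div1r exprVn addrA.
  have n1 := @poch_nz _ _ k h1; have n2 := @poch_nz _ _ k h2; have n3 := @poch_nz _ _ k h3.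
  have nf : (k`!)%:R != 0 :> R[i] by rewrite pnatr_eq0 -lt0n fact_gt0.
  by field; rewrite n1 n2 n3 nf expf_neq0.
have h5' : admissible_lower ((1 + (1 + c - b - n%:R)) / 2).
  by have -> : 1 + (1 + c - b - n%:R) = 2 + c - b - n%:R by ring.
have Rr : poch (1 + c - a) n * poch (b - c) n *
    F43_term n (1 + c - b) (1 - b - n%:R) c
        ((1 + c - b - n%:R) / 2) ((2 + c - b - n%:R) / 2) (1 + c - a) (1 / 4) =
  \sum_(k < n.+1) (-1)^+k * ('C(n,k))%:R * poch c k * poch (b - c - k%:R) (n-k)
    * poch (1 + c - a + k%:R) (n-k) * poch (b + (n-k)%:R) k.
  rewrite /F43_term mulr_sumr; apply: eq_bigr => [[k Hk]] _ /=.
  rewrite ltnS in Hk.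
  have ee : poch (1 + c - a) n = poch (1 + c - a) k * poch (1 + c - a + k%:R) (n-k).
    by rewrite -pochD subnKC.
  have ebc : poch (b - c) n = (-1)^+n * poch (1 + c - b - n%:R) n.
    by rewrite -poch_refl; congr poch; ring.
  have eW := @poch_half _ (1 + c - b - n%:R) k h2nz.
  have eYX : poch (1 + c - b - n%:R) n * poch (1 + c - b) k =
     poch (1 + c - b - n%:R) (2 * k) * poch (1 + c - b - n%:R + (2*k)%:R) (n-k).
    rewrite -pochD.
    have -> : (2 * k + (n - k) = n + k)%N by lia.
    by rewrite pochD; congr (_ * poch _ _); ring.
  have eR : poch (1 + c - b - n%:R + (2*k)%:R) (n-k) = (-1)^+(n-k) * poch (b - c - k%:R) (n-k).
    rewrite -poch_refl; congr poch; rewrite natrB // natrM; ring.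
  have eB : poch (1 - b - n%:R) k = (-1)^+k * poch (b + (n-k)%:R) k.
    rewrite -poch_refl; congr poch; rewrite natrB //; ring.
  rewrite -eW eR in eYX.
  have n1 := @poch_nz _ _ k h4; have n2 := @poch_nz _ _ k h5'; have n3 := @poch_nz _ _ k h6.
  have nf : (k`!)%:R != 0 :> R[i] by rewrite pnatr_eq0 -lt0n fact_gt0.
  have eV : poch (b - c - k%:R) (n-k) = (-1)^+(n-k) * (poch (1 + c - b - n%:R) n * poch (1 + c - b) k /
     (poch ((1 + c - b - n%:R) / 2) k * poch ((1 + (1 + c - b - n%:R)) / 2) k * 4 ^+ k)).
    rewrite eYX -(signr_odd _ (n-k)); case: (odd (n-k)); rewrite /= ?expr0 ?expr1;
    by field; rewrite expf_neq0 // n1 n2.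
  have en : (-1)^+n = (-1)^+k * (-1)^+(n-k) :> R[i] by rewrite -exprD subnKC.
  rewrite eV ee ebc eB poch_negn div1r exprVn en.
  have -> : (1 + (1 + c - b - n%:R)) / 2 = (2 + c - b - n%:R) / 2 by congr (_ / _); ring.
  rewrite -(signr_odd _ (n-k)) -(signr_odd _ k).
  rewrite natrM.
  have n2' := @poch_nz _ _ k h5.
  case: (odd (n-k)); case: (odd k); rewrite /= ?expr0 ?expr1;
  by field; rewrite n1 n2' n3 nf expf_neq0.
apply: (mulIf hD); rewrite L.
transitivity (poch (1 + c - a) n * poch (b - c) n *
    F43_term n (1 + c - b) (1 - b - n%:R) c
        ((1 + c - b - n%:R) / 2) ((2 + c - b - n%:R) / 2) (1 + c - a) (1 / 4)).
  by rewrite Rr core.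
by field; rewrite h7 poch_nz.
Qed.
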